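(* For all $n\ge1$ and $j\in\{1,2,3\}$, $$\|\varphi^{(j)}_n\|^2=\frac{\mu_+^{n+1}-\mu_-^{n+1}}{\mu_+-\mu_-},$$ where $\mu_\pm=(1\pm\sqrt{1+4|\lambda|^2})/2$. Consequently, with $\mu=\mu_-/\mu_+\in(-1,0]$ and $\alpha_n=\|\varphi_{n-1}\|^2/\|\varphi_n\|^2$ (convention $\varphi_0=1$), $$\alpha_n=\frac1{\mu_+}\,\frac{1-\mu^n}{1-\mu^{n+1}}.$$
   Context: $\lambda\in\mathbb C$. For $L\in\mathbb N$, $\varphi_L\in\bigotimes_{x=1}^{3L}\mathbb C^2$ is $\varphi_L=\sum_{\mathbf D}\lambda^{\#(\mathbf D)}|\boldsymbol\sigma(\mathbf D)\rangle$, summing over all tilings $\mathbf D$ of $[1,3L]$ obtained from $L$ consecutive monomers (length 3, content $100$) by replacing some disjoint pairs of consecutive monomers by a dimer (length 6, content $011000$); $\#(\mathbf D)$ is the number of dimers, $\boldsymbol\sigma(\mathbf D)$ the concatenated 0/1 content, and $|\boldsymbol\sigma\rangle$ the orthonormal product basis. For $j\in\{1,2\}$, $\varphi^{(j)}_L$ on $[1,3(L-1)+j]$ is defined likewise from $L-1$ monomers followed by a right $j$-monomer (content $1$, resp. $10$), where the last monomer and the right $j$-monomer may also be replaced by a truncated $j$-dimer (content $0110$, resp. $01100$), counted in $\#(\mathbf D)$. $\varphi^{(3)}_L=\varphi_L$. *)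

(* Defs.v *)
From HB Require Import structures.
From mathcomp Require Import all_boot all_order all_algebra.
From mathcomp Require Import complex.
Set Implicit Arguments. Unset Strict Implicit. Unset Printing Implicit Defensive.
Import Order.TTheory GRing.Theory Num.Theory.
Local Open Scope ring_scope.

Definition sqmod (R : rcfType) (z : R[i]) : R :=
  let: Complex a b := z in a ^+ 2 + b ^+ 2.

(* A tiling D built from L consecutive monomers (indexed 0..L-1) is encoded by
   the set S of (0-based) indices k of the monomers that are the LEFT member
   of a pair (k, k+1) replaced by a dimer. *)
Definition valid_tiling (L : nat) (S : {set 'I_L}) : bool :=
  [forall i : 'I_L, (i \in S) ==>
     ((i.+1 < L)%N && [forall k : 'I_L, (k \in S) ==> (val k != i.+1)])].

Definition memS (L : nat) (S : {set 'I_L}) (k : nat) : bool :=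
  [exists i : 'I_L, (i \in S) && (val i == k)].

(* Content of site x (0-based, x < 3L) of the full tiling: monomer k occupies
   sites 3k,3k+1,3k+2.  Monomer content is 100; a dimer on (k,k+1) has
   content 011000 = 011 (on monomer k) followed by 000 (on monomer k+1). *)
Definition site (L : nat) (S : {set 'I_L}) (x : nat) : bool :=
  let k := (x %/ 3)%N in let r := (x %% 3)%N in
  if memS S k then r != 0%N
  else if (0 < k)%N && memS S k.-1 then false
  else r == 0%N.

Definition chain_len (j L : nat) : nat := (3 * L + j - 3)%N.

(* phi^(j)_L as the coefficient vector in the orthonormal product basis
   |sigma>, sigma : {0,1}^[1, 3(L-1)+j].  The tilings of phi^(j)_L are the
   tilings of L monomers truncated to their first 3(L-1)+j sites: the last
   monomer becomes the right j-monomer (content 1 / 10) and a dimer on the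
   last pair becomes the truncated j-dimer (content 0110 / 01100).
   phi^(3)_L = phi_L.  *)
Definition phi (R : rcfType) (lam : R[i]) (j L : nat)
    (sigma : {ffun 'I_(chain_len j L) -> bool}) : R[i] :=
  \sum_(S : {set 'I_L} | valid_tiling S &&
          [forall x : 'I_(chain_len j L), sigma x == site S x])
     lam ^+ #|S|.
Arguments phi {R} lam j L sigma.

Definition normsq (R : rcfType) (lam : R[i]) (j L : nat) : R :=
  \sum_(sigma : {ffun 'I_(chain_len j L) -> bool}) sqmod (phi lam j L sigma).

Definition mu_plus (R : rcfType) (lam : R[i]) : R :=
  (1 + Num.sqrt (1 + 4 * sqmod lam)) / 2.
Definition mu_minus (R : rcfType) (lam : R[i]) : R :=
  (1 - Num.sqrt (1 + 4 * sqmod lam)) / 2.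

(* alpha_n = ||phi_{n-1}||^2 / ||phi_n||^2  (phi_0 = 1: the empty chain) *)
Definition alpha (R : rcfType) (lam : R[i]) (n : nat) : R :=
  normsq lam 3 n.-1 / normsq lam 3 n.

(* Main.v *)
Require Import Defs.
From HB Require Import structures.
From mathcomp Require Import all_boot all_order all_algebra.
From mathcomp Require Import complex.
From mathcomp Require Import ring lra zify.
Import Order.TTheory GRing.Theory Num.Theory.
Local Open Scope ring_scope.

Lemma sqmodM (R : rcfType) (a b : R[i]) : sqmod (a * b) = sqmod a * sqmod b.
Proof. case: a => a1 a2; case: b => b1 b2 /=. ring. Qed.

Lemma sqmod0 (R : rcfType) : sqmod (0 : R[i]) = 0.
Proof. rewrite /=. ring. Qed.

Lemma sqmod1 (R : rcfType) : sqmod (1 : R[i]) = 1.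
Proof. rewrite /=. ring. Qed.

Lemma sqmodX (R : rcfType) (a : R[i]) k : sqmod (a ^+ k) = sqmod a ^+ k.
Proof. elim: k => [|k IH]; first by rewrite !expr0 sqmod1.
by rewrite !exprS sqmodM IH. Qed.

Lemma sqmod_ge0 (R : rcfType) (a : R[i]) : 0 <= sqmod a.
Proof. case: a => a1 a2 /=. by rewrite addr_ge0 // sqr_ge0. Qed.

Lemma validP L (S : {set 'I_L}) :
  reflect (forall i : 'I_L, i \in S -> (i.+1 < L)%N /\ forall k : 'I_L, k \in S -> val k <> i.+1)
          (valid_tiling S).
Proof.
apply: (iffP forallP) => H i.
- move=> iS; have /implyP /(_ iS) /andP [h1 /forallP h2] := H i.
  split=> // k kS; apply/eqP; exact: (implyP (h2 k) kS).
- apply/implyP => iS; have [h1 h2] := H i iS; rewrite h1 /=.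
  apply/forallP => k; apply/implyP => kS; apply/eqP; exact: h2.
Qed.

Lemma memS_ord L (S : {set 'I_L}) (i : 'I_L) : memS S i = (i \in S).
Proof.
apply/existsP/idP => [[i' /andP [i'S /eqP e]]|iS]; last by exists i; rewrite iS eqxx.
by have -> : i = i' by apply: val_inj.
Qed.

Lemma site_mid L (S : {set 'I_L}) (i : nat) : site S (3 * i + 1) = memS S i.
Proof.
rewrite /site.
have -> : ((3 * i + 1) %/ 3 = i)%N by rewrite mulnC divnMDl // addn0.
have -> : ((3 * i + 1) %% 3 = 1)%N by rewrite mulnC modnMDl.
by case: (memS S i) => //=; case: ifP.
Qed.

Lemma site_inj j L (S1 S2 : {set 'I_L}) : (1 <= j)%N ->
  valid_tiling S1 -> valid_tiling S2 ->
  (forall t : 'I_(chain_len j L), site S1 t = site S2 t) -> S1 = S2.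
Proof.
move=> j1 /validP V1 /validP V2 H; apply/setP => i.
case: (ltnP i.+1 L) => hi.
- have ht : (3 * i + 1 < chain_len j L)%N by rewrite /chain_len; lia.
  have := H (Ordinal ht); rewrite /= !site_mid !memS_ord //.
- apply/idP/idP => iS.
  + by have [] := V1 i iS; rewrite ltnNge hi.
  + by have [] := V2 i iS; rewrite ltnNge hi.
Qed.

Lemma normsq_sum (R : rcfType) (lam : R[i]) j L : (1 <= j)%N ->
  normsq lam j L = \sum_(S : {set 'I_L} | valid_tiling S) sqmod lam ^+ #|S|.
Proof.
move=> j1; rewrite /normsq /phi.
pose sg (S : {set 'I_L}) : {ffun 'I_(chain_len j L) -> bool} := [ffun t : 'I_(chain_len j L) => site S t].
have C : forall (sigma : {ffun 'I_(chain_len j L) -> bool}) (S : {set 'I_L}), [forall x : 'I_(chain_len j L), sigma x == site S x] = (sigma == sg S).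
  move=> sigma S; apply/forallP/eqP => [H|->] //.
  - by apply/ffunP => t; rewrite ffunE; apply/eqP.
  - by move=> t; rewrite ffunE.
under eq_bigr => sigma _.
  have -> : sqmod (\sum_(S : {set 'I_L} | valid_tiling S && [forall x, sigma x == site S x]) lam ^+ #|S|)
     = \sum_(S : {set 'I_L} | valid_tiling S && [forall x, sigma x == site S x]) sqmod lam ^+ #|S|.
    case: (pickP (fun S : {set 'I_L} => valid_tiling S && [forall x, sigma x == site S x])) => [S0 HS0|H0].
    + have P1 : (fun S : {set 'I_L} => valid_tiling S && [forall x, sigma x == site S x]) =1 pred1 S0.
        move=> S /=; apply/idP/eqP => [/andP [vS fS]|->] //.
        move/andP: HS0 => [v0 f0]; apply: (@site_inj j L S S0 j1 vS v0) => t.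
        by move/forallP/(_ t)/eqP: fS => <-; move/forallP/(_ t)/eqP: f0 => <-.
      by rewrite (big_pred1 S0 P1) (big_pred1 S0 P1) sqmodX.
    + by rewrite !big_pred0 // sqmod0.
  over.
rewrite /=.
under eq_bigr => sigma _ do rewrite big_mkcondr.
rewrite exchange_big /=; apply: eq_bigr => S vS.
rewrite -big_mkcond /=.
under eq_bigl => sigma do rewrite C.
by rewrite big_pred1_eq.
Qed.

Definition bnd {L} (m : nat) (S : {set 'I_L}) := [forall i : 'I_L, (i \in S) ==> (i.+1 < m)%N].

Lemma bndP L m (S : {set 'I_L}) : reflect (forall i : 'I_L, i \in S -> (i.+1 < m)%N) (bnd m S).
Proof.
by apply: (iffP forallP) => H i; [move=> iS; exact: (implyP (H i) iS) | apply/implyP; apply: H].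
Qed.

Definition G {R : rcfType} L (x : R) m :=
  \sum_(S : {set 'I_L} | valid_tiling S && bnd m S) x ^+ #|S|.

Lemma G_small (R : rcfType) L (x : R) m : (m <= 1)%N -> G L x m = 1.
Proof.
move=> m1; rewrite /G (big_pred1 set0) ?cards0 ?expr0 // => S /=.
apply/idP/eqP => [/andP [_ /bndP B]|->].
- apply/setP => i; rewrite inE; apply/negP => iS; have := B i iS; lia.
- apply/andP; split; first by apply/validP => i; rewrite inE.
  by apply/bndP => i; rewrite inE.
Qed.

Lemma G_full (R : rcfType) L (x : R) :
  G L x L = \sum_(S : {set 'I_L} | valid_tiling S) x ^+ #|S|.
Proof.
apply: eq_bigl => S; apply/andP/idP => [[]//|vS]; split => //.
by apply/bndP => i iS; move/validP: vS => /(_ i iS) [].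
Qed.

Lemma G_rec (R : rcfType) L (x : R) m : (m.+2 <= L)%N ->
  G L x m.+2 = G L x m.+1 + x * G L x m.
Proof.
move=> hL; have hm : (m < L)%N by lia.
pose m0 : 'I_L := Ordinal hm.
have m0E : forall k : 'I_L, (k == m0) = (nat_of_ord k == m).
  by move=> k; rewrite -val_eqE.
rewrite /G (bigID (fun S : {set 'I_L} => m0 \in S)) /= addrC; congr (_ + _).
- apply: eq_bigl => S; apply/idP/idP.
  + move=> /andP [/andP [vS /bndP B] nS]; rewrite vS /=; apply/bndP => i iS.
    have := B i iS; have : i != m0 by apply: contraNneq nS => <-.
    rewrite m0E; lia.
  + move=> /andP [vS /bndP B]; rewrite vS /=; apply/andP; split.
    * by apply/bndP => i iS; have := B i iS; lia.
    * by apply/negP => /B /=; lia.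
- rewrite mulr_sumr.
  rewrite (reindex_onto (fun S' => m0 |: S') (fun S => S :\ m0)); last first.
    by move=> S /andP [_ mS]; rewrite setD1K.
  apply: congr_big => //.
  + move=> S; apply/idP/idP.
    * move=> /andP [/andP [/andP [/validP V /bndP B] _] /eqP E].
      have nS : m0 \notin S by rewrite -E !inE eqxx.
      apply/andP; split.
      - apply/validP => i iS; have [h1 h2] := V i (setU1r _ iS).
        split => // k kS; exact: h2 k (setU1r _ kS).
      - apply/bndP => i iS; have := B i (setU1r _ iS).
        have ne : i != m0 by apply: contraNneq nS => <-.
        have [_ h2] := V i (setU1r _ iS).
        have := h2 m0 (setU11 _ _); rewrite m0E in ne => /= h.
        move: ne => /eqP ne; lia.
    * move=> /andP [/validP V /bndP B].
      have nS : m0 \notin S by apply/negP => /B /=; lia.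
      rewrite setU1K // eqxx setU11 !andbT; apply/andP; split.
      - apply/validP => i /setU1P [->|iS].
        + split => [/=|k /setU1P [->|kS] /=]; first lia; first lia.
          by have := B k kS; lia.
        + have [h1 h2] := V i iS; split => // k /setU1P [->|kS] /=.
          * by have := B i iS; lia.
          * exact: h2.
      - apply/bndP => i /setU1P [->|iS] /=; first lia.
        by have := B i iS; lia.
  + move=> S /andP [_ /eqP E].
    have nS : m0 \notin S by rewrite -E !inE eqxx.
    by rewrite cardsU1 nS exprS.
Qed.

Lemma ge1_aux (R: rcfType) (s x : R) : 0<=x -> 0<=s -> s*s = 1+4*x -> 1<=s.
Proof. move=> *. nra. Qed.

Section Closed.
Variables (R : rcfType) (x : R).
Hypothesis x0 : 0 <= x.
Let s : R := Num.sqrt (1 + 4 * x).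
Let P : R := (1 + s) / 2.
Let M : R := (1 - s) / 2.
Definition cc m := (P ^+ m.+1 - M ^+ m.+1) / (P - M).

Lemma s_sq : s * s = 1 + 4 * x.
Proof. by rewrite -expr2 sqr_sqrtr // addr_ge0 // mulr_ge0. Qed.
Lemma s_ge1 : 1 <= s.
Proof. apply: (@ge1_aux R s x x0); [exact: sqrtr_ge0 | exact: s_sq]. Qed.
Lemma PM : P - M = s.
Proof. by rewrite /P /M; field. Qed.
Lemma PM0 : P - M != 0.
Proof. rewrite PM; apply: lt0r_neq0; exact: lt_le_trans ltr01 s_ge1. Qed.
Lemma Pq : P * P - P - x = 0.
Proof.
transitivity ((s * s - 1 - 4 * x) / 4); first by rewrite /P; field.
by rewrite s_sq; field.
Qed.
Lemma Mq : M * M - M - x = 0.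
Proof.
transitivity ((s * s - 1 - 4 * x) / 4); first by rewrite /M; field.
by rewrite s_sq; field.
Qed.

Lemma cc0 : cc 0 = 1.
Proof. rewrite /cc !expr1 divff //; exact: PM0. Qed.
Lemma cc1 : cc 1 = 1.
Proof.
rewrite /cc; have := PM0; rewrite /P /M => H.
have -> : ((1 + s) / 2) ^+ 2 - ((1 - s) / 2) ^+ 2 = (1 + s) / 2 - (1 - s) / 2 by field.
by rewrite divff.
Qed.
Lemma ccS m : cc m.+2 = cc m.+1 + x * cc m.
Proof.
rewrite /cc !exprS; apply/eqP; rewrite -subr_eq0; apply/eqP.
have D := PM0.
transitivity ((P * P ^+ m * (P * P - P - x) - M * M ^+ m * (M * M - M - x)) / (P - M)).
  by field.
by rewrite Pq Mq !mulr0 subr0 mul0r.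
Qed.
Lemma cc_ge1 m : 1 <= cc m.
Proof.
suff : 1 <= cc m /\ 1 <= cc m.+1 by case.
elim: m => [|m [h1 h2]]; first by rewrite cc0 cc1.
split => //; rewrite ccS; apply: (le_trans h2).
by rewrite lerDl mulr_ge0 // (le_trans ler01 h1).
Qed.

Lemma G_cc L : \sum_(S : {set 'I_L} | valid_tiling S) x ^+ #|S| = cc L.
Proof.
rewrite -G_full.
case: L => [|L]; first by rewrite G_small // cc0.
suff : forall m, (m.+1 <= L.+1)%N -> G L.+1 x m = cc m /\ G L.+1 x m.+1 = cc m.+1.
  by move/(_ L (leqnn _)); case.
elim => [|m IH] hm; first by rewrite !G_small // cc0 cc1.
have [h1 h2] := IH (ltnW hm); split => //.
by rewrite G_rec // ccS h1 h2.
Qed.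
End Closed.

Lemma lt_aux (R : rcfType) (s : R) : 1 <= s ->
  -1 < ((1 - s) / 2) / ((1 + s) / 2) <= 0.
Proof.
move=> hs; have hP : 0 < (1 + s) / 2 by lra.
rewrite ltr_pdivlMr // ler_pdivrMr //; apply/andP; split; lra.
Qed.

Theorem lemma2p13 (R : rcfType) (lam : R[i]) :
  (forall (n j : nat), (1 <= n)%N -> (1 <= j <= 3)%N ->
     normsq lam j n =
       (mu_plus lam ^+ n.+1 - mu_minus lam ^+ n.+1) / (mu_plus lam - mu_minus lam))
  /\ (let mu := mu_minus lam / mu_plus lam in
      (-1 < mu <= 0) /\
      (forall n : nat, (1 <= n)%N ->
         alpha lam n = (mu_plus lam)^-1 * ((1 - mu ^+ n) / (1 - mu ^+ n.+1)))).
Proof.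
have x0 := @sqmod_ge0 R lam.
have NS : forall j n, (1 <= j)%N -> normsq lam j n = @cc R (sqmod lam) n.
  by move=> j n j1; rewrite normsq_sum // (@G_cc _ _ x0).
split.
  by move=> n j _ /andP [j1 _]; rewrite NS.
have hs := @s_ge1 _ _ x0.
have D := @PM0 _ _ x0.
have c1 := @cc_ge1 _ _ x0.
rewrite /alpha; split; first exact: lt_aux.
case=> [//|n] _ /=; rewrite !NS //.
have := c1 n.+1; have := c1 n.
rewrite /cc /mu_plus /mu_minus in D *.
set s := Num.sqrt _ in hs D *.
set P := (1 + s) / 2. set M := (1 - s) / 2.
have hP : P != 0 by apply: lt0r_neq0; rewrite /P; lra.
have D' : P - M != 0 by exact: D.
clearbody P M.
rewrite !expr_div_n !exprS.
have hp : P ^+ n != 0 by rewrite expf_neq0.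
move=> _ h2.
have hc : P * (P * P ^+ n) - M * (M * M ^+ n) != 0.
  apply/negP => /eqP E; move: h2; rewrite E mul0r ler10 //.
field; by rewrite ?hP ?hp ?hc ?D'.
Qed.
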